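(* Let $m$ be a positive integer, let $s \in S_m$ be a cycle of length $k < m$, and let $a$ be a positive divisor of $k$ with $(k,a) \neq (4,2)$. Then there exists $x \in S_m$ such that $\langle s \rangle \cap \langle s \rangle^x = \langle s^a \rangle$. *)

(* Defs.v *)
From mathcomp Require Import all_boot all_fingroup.
Set Implicit Arguments. Unset Strict Implicit. Unset Printing Implicit Defensive.

Definition is_cycle_of_length (T : finType) (s : {perm T}) (k : nat) : Prop :=
  exists x : T, #|porbit s x| = k /\ (forall y : T, y \notin porbit s x -> s y = y).

(* Main.v *)
Require Import Defs.
From mathcomp Require Import all_boot all_fingroup zify.

Section Orb.
Variables (T : finType) (s : {perm T}) (c : T).
Let k := #|porbit s c|.

Lemma sk_c : (s ^+ k)%g c = c.
Proof. by rewrite permX iter_porbit. Qed.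

Lemma orbit_mod i : (s ^+ i)%g c = (s ^+ (i %% k))%g c.
Proof.
rewrite {1}(divn_eq i k) expgD permM mulnC expgM.
by rewrite (permX_fix _ sk_c).
Qed.

Lemma orbit_inj i j : (s ^+ i)%g c = (s ^+ j)%g c -> i = j %[mod k].
Proof.
rewrite (orbit_mod i) (orbit_mod j) => H.
have k0 : 0 < k by rewrite lt0n card_porbit_neq0.
have U := uniq_traject_porbit s c.
apply/eqP; rewrite -(nth_uniq c _ _ U) ?size_traject ?ltn_pmod //.
by rewrite !nth_traject ?ltn_pmod // -!permX H.
Qed.

Lemma orbit_shift i n : (s ^+ n)%g ((s ^+ i)%g c) = (s ^+ (i + n))%g c.
Proof. by rewrite expgD permM. Qed.

Lemma sk1 : (forall y, y \notin porbit s c -> s y = y) -> (s ^+ k)%g = 1%g.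
Proof.
move=> Hf; apply/permP => z; rewrite perm1.
case: (boolP (z \in porbit s c)) => Hz; last by apply: permX_fix; apply: Hf.
case/porbitP: Hz => i ->.
by rewrite orbit_shift orbit_mod modnDr -orbit_mod.
Qed.

Lemma expg_modk i : (s ^+ k)%g = 1%g -> (s ^+ i)%g = (s ^+ (i %% k))%g.
Proof.
by move=> H; rewrite {1}(divn_eq i k) expgD mulnC expgM H expg1n mul1g.
Qed.
End Orb.

Arguments expg_modk {T} s c i.

Section Restr.
Variables (T : finType) (u : {perm T}) (c : T).
Let C := porbit u c.
Lemma memC_u z : (u z \in C) = (z \in C).
Proof.
have E := porbit_perm u 1 z; rewrite expg1 in E.
by rewrite /C porbit_sym E porbit_sym.
Qed.
Definition rf z := if z \in C then u z else z.
Lemma rf_inj : injective rf.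
Proof.
move=> z1 z2; rewrite /rf.
case: (boolP (z1 \in C)) => H1; case: (boolP (z2 \in C)) => H2.
- exact: perm_inj.
- by move=> E; move: H2; rewrite -E memC_u H1.
- by move=> E; move: H1; rewrite E memC_u H2.
- by [].
Qed.
Definition restr := perm rf_inj.
Lemma restr_comm : (restr * u = u * restr)%g.
Proof.
apply/permP => z; rewrite !permM !permE /rf memC_u.
by case: (z \in C).
Qed.
End Restr.
Arguments restr {T} u c. Arguments restr_comm {T} u c. Arguments rf {T} u c z. Arguments memC_u {T} u c z.

Lemma k_eq_2a k a t : (0 < a)%N -> (a < k)%N -> (a + a = t * k)%N -> k = (a + a)%N.
Proof. by case: t => [|[|t]]; rewrite ?mul0n ?mul1n ?mulSn; lia. Qed.
Local Open Scope group_scope.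

Theorem lemma3p5 (m : nat) (s : 'S_m) (k a : nat) :
  (0 < m)%N -> is_cycle_of_length s k -> (k < m)%N ->
  (0 < a)%N -> (a %| k)%N -> (k, a) != (4, 2)%N ->
  exists x : 'S_m, <[s]> :&: (<[s]> :^ x) = <[s ^+ a]>.
Proof.
move=> m0 [c [Hk Hfix]] km a0 ak Hne.
have S1 : s ^+ k = 1 by rewrite -Hk; apply: sk1.
have k0 : (0 < k)%N by rewrite -Hk lt0n card_porbit_neq0.
have Oinj i j : (s ^+ i) c = (s ^+ j) c -> (i = j %[mod k])%N.
  by rewrite -Hk; apply: orbit_inj.
case: (eqVneq a k) => [Eak | Nak].
  have [p Hp] : exists p, p \notin porbit s c.
    have := cardsC (porbit s c); rewrite card_ord Hk => H.
    have : (0 < #|~: porbit s c|)%N by lia.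
    by rewrite card_gt0 => /set0Pn[p]; rewrite in_setC => Hp; exists p.
  exists (tperm c p).
  rewrite Eak S1 cycle1.
  apply/eqP; rewrite eqEsubset sub1G andbT.
  apply/subsetP => y /setIP[/cycleP[n ->]]; rewrite mem_conjg => /cycleP[j Hj].
  have Hpc : p != c by apply: contraNneq Hp => ->; apply: porbit_id.
  have Hc : (s ^+ j) c = c.
    rewrite -Hj conjgE invgK tpermV !permM tpermL (permX_fix _ (Hfix _ Hp)).
    by rewrite tpermR.
  have : (j = 0 %[mod k])%N by apply: Oinj; rewrite expg0 perm1.
  rewrite mod0n => Ej.
  move: Hj; rewrite (@expg_modk _ s c j); last by rewrite Hk.
  rewrite Hk Ej expg0 => /eqP.
  by rewrite conjg_eq1 inE.
have ak' : (a < k)%N by rewrite ltn_neqAle Nak dvdn_leq.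
set u := s ^+ a.
set x := restr u c.
have Hcomm : x * u = u * x := restr_comm u c.
have ux : u ^ x = u by rewrite conjgE -Hcomm mulKg.
have ux' : u ^ x^-1 = u by rewrite conjgE invgK mulgA Hcomm mulgK.
exists x.
apply/eqP; rewrite eqEsubset; apply/andP; split; last first.
  rewrite cycle_subG inE mem_cycle mem_conjg ux' /u mem_cycle //.
apply/subsetP => y /setIP[/cycleP[n ->]]; rewrite mem_conjg => /cycleP[j Hj].
have Hn : s ^+ n = (s ^+ j) ^ x by rewrite -Hj conjgKV.
suff aj : (a %| j)%N.
  case/dvdnP: aj => q Eq.
  by rewrite Hn Eq mulnC expgM conjXg -/u ux mem_cycle.
apply/negPn/negP => naj.
set ci := fun i => (s ^+ i) c.
have Csn i n' : (s ^+ n') (ci i) = ci (i + n')%N by rewrite /ci orbit_shift.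
have memC i : ((ci i) \in porbit u c) = (a %| i)%N.
  apply/idP/idP.
    case/porbitP => q; rewrite /u -expgM => /Oinj E.
    have := congr1 (modn^~ a) E.
    by rewrite !modn_dvdm // modnMr => /eqP.
  by case/dvdnP => q ->; rewrite /ci mulnC expgM mem_porbit.
have Xci i : x (ci i) = if (a %| i)%N then ci (i + a)%N else ci i.
  by rewrite /x /restr permE /rf memC; case: ifP => //; rewrite /u Csn.
have K i : x (ci (i + j)%N) = (s ^+ n) (x (ci i)).
  rewrite Hn conjgE !permM permK -Csn //.
have Ec i i' : ci i = ci i' -> (i = i' %[mod k])%N by apply: Oinj.
have E1 : (j = a + n %[mod k])%N.
  have := K 0%N; rewrite !Xci dvdn0 add0n (negbTE naj) Csn => /Ec.
  by rewrite addnC.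
set i0 := (k - j %% k)%N.
have i0j : (a %| i0 + j)%N.
  have : (k %| i0 + j)%N.
    have -> : (i0 + j = (j %/ k).+1 * k)%N.
      rewrite /i0; have := divn_eq j k; have := ltn_pmod j k0.
      move: (j %/ k)%N (j %% k)%N => q r; nia.
    exact: dvdn_mull.
  by apply: dvdn_trans.
have ni0 : ~~ (a %| i0)%N.
  by apply: contra naj => H; rewrite -(dvdn_addr _ H).
have E2 : (j + a = n %[mod k])%N.
  have := K i0; rewrite !Xci i0j (negbTE ni0) Csn => /Ec.
  by rewrite -addnA addnC [(i0 + n)%N]addnC => /eqP; rewrite eqn_modDr => /eqP.
have k2a : (k %| a + a)%N.
  have H : (j + a + a = n + a %[mod k])%N by apply/eqP; rewrite eqn_modDr E2.
  rewrite [(n + a)%N]addnC -E1 in H.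
  have : (j + (a + a) == j + 0 %[mod k])%N by rewrite addn0 addnA H.
  by rewrite eqn_modDl mod0n.
have Eka : k = (a + a)%N.
  by case/dvdnP: k2a => t; apply: k_eq_2a.
have a1 : a != 1%N by apply: contra naj => /eqP ->; rewrite dvd1n.
have a3 : (2 < a)%N.
  case: (ltngtP a 2) => // [Hl|Ha]; first by move: a1; rewrite ltnS in Hl; rewrite eqn_leq Hl a0.
  by move: Hne; rewrite Eka Ha.
have [i1 [ni1 ni1j]] : exists i1, ~~ (a %| i1)%N /\ ~~ (a %| i1 + j)%N.
  case: (boolP (a %| 1 + j)%N) => H.
    exists 2%N; split.
      by apply/negP => /dvdn_leq H2; move: (H2 isT); rewrite leqNgt a3.
    have -> : (2 + j = 1 + (1 + j))%N by rewrite addnA.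
    by rewrite dvdn_addl // dvdn1.
  by exists 1%N; rewrite dvdn1 a1.
have E3 : (j = n %[mod k])%N.
  have := K i1; rewrite !Xci (negbTE ni1) (negbTE ni1j) Csn => /Ec /eqP.
  by rewrite eqn_modDl => /eqP.
have : (a + n = 0 + n %[mod k])%N by rewrite -E1 E3.
move/eqP; rewrite eqn_modDr mod0n modn_small // => /eqP Ha.
by rewrite Ha in a0.
Qed.
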